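(* Let $R$ (red) and $B$ (blue) be finite sets of points in the plane with $S=B\cup R$ in general position, $r=|R|$ and $|B|=r+2\delta$ for an integer $\delta\ge 0$. Let $k\ge 0$ be an integer. (i) In an $R^k$-rotation, every transition $\delta\rightsquigarrow\delta+1$ or $\delta+1\rightsquigarrow\delta$ of $\omega(R^k_t)$, occurring at angle $t_0$, occurs through a balanced line, i.e. the line $R^k_{t_0}$ is a balanced line. (ii) In a $B^k$-rotation, every transition $\delta\rightsquigarrow\delta-1$ or $\delta-1\rightsquigarrow\delta$ of $\omega(B^k_t)$, occurring at angle $t_0$, occurs through a balanced line, i.e. the line $B^k_{t_0}$ is a balanced line.
   Context: General position means no three points of $S$ are collinear. Coordinates are chosen so that all points of $S$ have distinct abscissae. Each blue point has weight $\omega(p)=+1$ and each red point has weight $\omega(q)=-1$. For an open halfplane $H$, $\omega(H)=\sum_{s\in S\cap H}\omega(s)$. For a directed line $\ell$, $\ell^+$ and $\ell^-$ denote the open halfplanes to the right and to the left of $\ell$, and $\omega(\ell):=\omega(\ell^+)$. A line determined by two points of $S$ is balanced if both open halfplanes it bounds have weight $\delta$. For $P\subseteq S$ and an integer $k$, a $P^k$-rotation is a family of directed lines $P^k_t$, $t\in[0,2\pi]$, where $t$ is the angle of the direction of the line measured from the vertical axis, such that $P^k_0$ contains exactly one point of $P$, and as $t$ increases the line rotates counterclockwise so that (i) $|P\cap P^k_t|=1$ except for finitely many values of $t$ at which $|P\cap P^k_t|=2$, and (ii) whenever $|P\cap P^k_t|=1$, exactly $k$ points of $P$ lie to the right of $P^k_t$.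 The point of $P$ on the line (the pivot) changes exactly when the line contains two points of $P$; $P^k_0=P^k_{2\pi}$. A transition $a\rightsquigarrow a'$ of $\omega(P^k_t)$ at angle $t_0$ means that $\omega(P^k_t)=a$ for all $t<t_0$ sufficiently close to $t_0$ and $\omega(P^k_t)=a'$ for all $t>t_0$ sufficiently close to $t_0$ (angles taken cyclically). *)

(* Defs.v *)
From HB Require Import structures.
From mathcomp Require Import all_boot all_order all_algebra.
From mathcomp Require Import all_classical all_reals all_analysis.
Set Implicit Arguments. Unset Strict Implicit. Unset Printing Implicit Defensive.
Import Order.TTheory GRing.Theory Num.Theory numFieldNormedType.Exports.
Local Open Scope ring_scope.
Local Open Scope classical_set_scope.

Section Geom.
Variable R : realType.
Notation pt := (R * R)%type.

(* A directed line at angle t (angle of its direction measured from the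
   vertical axis, counterclockwise): direction (-sin t, cos t).  Its right
   unit normal is (cos t, sin t); the line with offset c is
   { x | cos t * x.1 + sin t * x.2 = c }. *)
Definition lval (t : R) (x : pt) : R := cos t * x.1 + sin t * x.2.
Definition on_line (t c : R) : pred pt := fun x => lval t x == c.
Definition right_of (t c : R) : pred pt := fun x => c < lval t x.
Definition left_of (t c : R) : pred pt := fun x => lval t x < c.

Definition weight (Blue Red : seq pt) (H : pred pt) : int :=
  (count H Blue)%:Z - (count H Red)%:Z.

Definition general_position (S : seq pt) : Prop :=
  forall p q s, p \in S -> q \in S -> s \in S ->
    p != q -> q != s -> p != s ->
    (q.1 - p.1) * (s.2 - p.2) - (q.2 - p.2) * (s.1 - p.1) != 0.

Definition distinct_abscissae (S : seq pt) : Prop :=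
  forall p q, p \in S -> q \in S -> p != q -> p.1 != q.1.

(* A P^k-rotation, described by the offset h t of the line P^k_t at angle t
   (line = on_line t (h t)), extended 2pi-periodically to all angles;
   the line moves continuously. *)
Definition is_rotation (P : seq pt) (k : nat) (h : R -> R) : Prop :=
  [/\ (forall t, h (t + 2 * pi) = h t),
      continuous h,
      count (on_line 0 (h 0)) P = 1%N &
      [/\
      (forall t, count (on_line t (h t)) P = 1%N \/
                 count (on_line t (h t)) P = 2%N),

      finite_set [set t | 0 <= t <= 2 * pi /\ count (on_line t (h t)) P = 2%N] &
      (forall t, count (on_line t (h t)) P = 1%N ->
                 count (right_of t (h t)) P = k)]].

Definition transition (f : R -> int) (t0 : R) (a a' : int) : Prop :=
  exists2 e : R, 0 < e &
    (forall t, t0 - e < t < t0 -> f t = a) /\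
    (forall t, t0 < t < t0 + e -> f t = a').

Definition balanced (Blue Red : seq pt) (delta : int) (t c : R) : Prop :=
  [/\ exists p q, [/\ p \in Blue ++ Red, q \in Blue ++ Red, p != q,
                      on_line t c p & on_line t c q],
      weight Blue Red (right_of t c) = delta &
      weight Blue Red (left_of t c) = delta].

End Geom.

(* Main.v *)
Require Import Defs.
From HB Require Import structures.
From mathcomp Require Import all_boot all_order all_algebra.
From mathcomp Require Import all_classical all_reals all_analysis.
From mathcomp Require Import zify ring lra.
Import Order.TTheory GRing.Theory Num.Theory.
Local Open Scope ring_scope.

Module M_H1.
Import numFieldNormedType.Exports.
Section Helpers.
Variable R : realType.
Notation pt := (R * R)%type.

Lemma per_int (f : R -> R) (T : R) : (forall u, f (u + T) = f u) ->
  forall (n : int) u, f (u + n%:~R * T) = f u.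
Proof.
move=> fP n; have Hn : forall m : nat, forall u, f (u + m%:R * T) = f u.
  elim=> [|m IH] u; first by rewrite mul0r addr0.
  by rewrite -[m.+1]addn1 natrD mulrDl mul1r addrA fP IH.
case: n => m u; first by rewrite Hn.
rewrite NegzE mulrNz.
have -> : u = (u - (m.+1)%:R * T) + (m.+1)%:R * T by ring.
rewrite Hn; congr f; ring.
Qed.

Lemma lval_per (n : int) (t : R) (x : pt) : lval (t + n%:~R * (2 * pi)) x = lval t x.
Proof.
have hc : forall u, cos (u + 2 * pi) = cos u :> R.
  by move=> u; rewrite -(cosD2pi u) mulr_natl.
have hs : forall u, sin (u + 2 * pi) = sin u :> R.
  by move=> u; rewrite -(sinD2pi u) mulr_natl.
by rewrite /lval (per_int _ _ hc) (per_int _ _ hs).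
Qed.

Lemma collinear (t c : R) (p q s : pt) : on_line t c p -> on_line t c q -> on_line t c s ->
  (q.1 - p.1) * (s.2 - p.2) - (q.2 - p.2) * (s.1 - p.1) = 0.
Proof.
rewrite /on_line /lval => /eqP Hp /eqP Hq /eqP Hs.
have E1 : cos t * (q.1 - p.1) + sin t * (q.2 - p.2) = 0.
  by rewrite !mulrBr addrACA -opprD Hq Hp subrr.
have E2 : cos t * (s.1 - p.1) + sin t * (s.2 - p.2) = 0.
  by rewrite !mulrBr addrACA -opprD Hs Hp subrr.
set D := _ - _.
rewrite -[D]mul1r -(cos2Dsin2 t).
have -> : (cos t ^+ 2 + sin t ^+ 2) * D =
  cos t * ((s.2 - p.2) * (cos t * (q.1 - p.1) + sin t * (q.2 - p.2))
           - (q.2 - p.2) * (cos t * (s.1 - p.1) + sin t * (s.2 - p.2)))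
  + sin t * ((q.1 - p.1) * (cos t * (s.1 - p.1) + sin t * (s.2 - p.2))
           - (s.1 - p.1) * (cos t * (q.1 - p.1) + sin t * (q.2 - p.2))).
  by rewrite /D; ring.
by rewrite E1 E2 !mulr0 subrr !mulr0 addr0.
Qed.

Lemma two_in (L : seq pt) (P : pred pt) : uniq L -> (1 < count P L)%N ->
  exists x y, [/\ x \in L, y \in L, x != y, P x & P y].
Proof.
move=> uL; rewrite -size_filter.
have U := filter_uniq P uL.
have M : forall z, z \in [seq u <- L | P u] -> z \in L /\ P z.
  by move=> z; rewrite mem_filter => /andP[].
case E: [seq u <- L | P u] U M => [|x [|y s]] // U M _.
have [xL Px] := M x (mem_head _ _).
have [yL Py] : y \in L /\ P y by apply: M; rewrite !inE eqxx orbT.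
exists x, y; split=> //.
move: U; rewrite /= inE negb_or => /andP[/andP[] ] //.
Qed.

Lemma one_in (L : seq pt) (P : pred pt) : (0 < count P L)%N ->
  exists x, x \in L /\ P x.
Proof. by rewrite -has_count => /hasP[x xL Px]; exists x. Qed.

Lemma trichot (L : seq pt) (t c : R) :
  (count (right_of t c) L + count (on_line t c) L + count (left_of t c) L)%N = size L.
Proof.
elim: L => //= x L IH.
rewrite /right_of /on_line /left_of /= in IH *.
case: (ltgtP (lval t x) c) => /= _; lia.
Qed.

Lemma count_split (Q : seq pt) (t0 c0 t c : R) :
  (forall x, x \in Q -> ~~ on_line t0 c0 x -> right_of t c x = right_of t0 c0 x) ->
  count (right_of t c) Q = (count (right_of t0 c0) Q +
     count (fun x => on_line t0 c0 x && right_of t c x) Q)%N.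
Proof.
elim: Q => //= x Q IH H.
rewrite IH; last by move=> y yQ; apply: H; rewrite inE yQ orbT.
case O: (on_line t0 c0 x) => /=.
  have -> : right_of t0 c0 x = false.
    by move: O; rewrite /on_line /right_of => /eqP ->; rewrite ltxx.
  case: (right_of t c x) => /=; lia.
rewrite H ?mem_head ?O //; case: (right_of t0 c0 x) => /=; lia.
Qed.

End Helpers.
End M_H1.
Import M_H1.

Module M_H2.
Import numFieldNormedType.Exports.
Section Helpers2.
Variable R : realType.
Notation pt := (R * R)%type.

Lemma generic (P : seq pt) k (h : R -> R) (a b : R) : is_rotation P k h -> a < b ->
  exists t, a < t < b /\ count (on_line t (h t)) P = 1%N.
Proof.
move=> [hper hc h0 [h12 hfin hk]] ab.
case: (pselect (exists t, a < t < b /\ count (on_line t (h t)) P = 1%N)) => // Hn.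
exfalso.
have H2 : forall t, a < t < b -> count (on_line t (h t)) P = 2%N.
  move=> t tab; case: (h12 t) => // H1; exfalso; apply: Hn; by exists t.
have pi0 : 0 < 2 * pi :> R by rewrite mulr_gt0 // pi_gt0.
set m := Num.floor (a / (2 * pi)).
have /andP[fl fu] := floor_itv (a / (2 * pi)); rewrite -/m in fl fu.
rewrite ler_pdivlMr // in fl; rewrite ltr_pdivrMr // intrD mulrDl mul1r in fu.
set c := a - m%:~R * (2 * pi).
have c0 : 0 <= c by rewrite /c subr_ge0.
have c2 : c < 2 * pi by rewrite /c; lra.
set d : R := Num.min (b - a) (2 * pi - c).
have d0 : 0 < d by rewrite /d lt_min; apply/andP; split; lra.
have d1 : d <= b - a by rewrite /d ge_min lexx.
have d2 : d <= 2 * pi - c by rewrite /d ge_min lexx orbT.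
pose g := fun n : nat => c + d / (n.+2)%:R.
have gb : forall n : nat, 0 < d / (n.+2)%:R < d.
  move=> n; rewrite divr_gt0 //= ltr_pdivrMr // ltr_pMr //.
  by rewrite ltr1n.
have := (finite_setPn _).1 hfin; apply; apply/pcard_leP; apply/injfunPex.
exists g.
  move=> n _ /=; have /andP[g1 g2] := gb n; split.
    rewrite /g; apply/andP; clear -c0 c2 d2 g1 g2; clearbody c d.
    set q := d / n.+2%:R in g1 g2 *; clearbody q; split; lra.
  have -> : g n = (a + d / (n.+2)%:R) + (- m)%:~R * (2 * pi).
    by rewrite /g /c mulrNz; ring.
  rewrite /on_line.
  have -> : h ((a + d / (n.+2)%:R) + (- m)%:~R * (2 * pi)) = h (a + d / (n.+2)%:R).
    by apply: per_int => u; rewrite hper.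
  under eq_count => x do rewrite lval_per.
  rewrite -/(on_line _ _).
  apply: H2; clear -d1 g1 g2; set q := d / n.+2%:R in g1 g2 *; clearbody q d; apply/andP; split; lra.
move=> x y _ _; rewrite /g => /addrI /mulfI.
have dn0 : d != 0 by rewrite gt_eqF.
move=> /(_ dn0) /invr_inj /eqP; rewrite eqr_nat => /eqP [] //.
Qed.
End Helpers2.
End M_H2.
Import M_H2.

Module M_H3.
Import numFieldNormedType.Exports.
Section Helpers3.
Variable R : realType.
Notation pt := (R * R)%type.

Lemma near_side1 (h : R -> R) (t0 : R) (x : pt) : continuous h ->
  \forall t \near t0, ~~ on_line t0 (h t0) x -> right_of t (h t) x = right_of t0 (h t0) x.
Proof.
move=> hc.
have cg : ((fun t => lval t x - h t) @ t0 --> (lval t0 x - h t0))%classic.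
  apply: cvgB; last exact: hc.
  rewrite /lval; apply: cvgD; apply: cvgMl; [exact: continuous_cos | exact: continuous_sin].
rewrite /on_line /right_of /=.
case: (ltgtP (lval t0 x) (h t0)) => H.
- near=> t => _.
  have : lval t x - h t < 0.
    near: t; apply: (cvgr_lt _ cg); lra.
  by rewrite subr_lt0 => Hl; rewrite ltNge (ltW Hl).
- near=> t => _.
  have : 0 < lval t x - h t.
    near: t; apply: (@cvgr_gt _ _ _ _ _ _ cg); lra.
  by rewrite subr_gt0 => ->.
- by near=> t.
Unshelve. all: by end_near.
Qed.

Lemma ball_side1 (h : R -> R) (t0 : R) (x : pt) : continuous h ->
  exists2 e : R, 0 < e & forall t, t0 - e < t < t0 + e ->
    ~~ on_line t0 (h t0) x -> right_of t (h t) x = right_of t0 (h t0) x.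
Proof.
move=> hc; have [e e0 He] := (nbhs_ballP _ _).1 (near_side1 h t0 x hc).
by exists e => // t tI; apply: He; rewrite /ball /= ltr_distlC.
Qed.

Lemma near_sides (Q : seq pt) (h : R -> R) (t0 : R) : continuous h ->
  exists2 e : R, 0 < e & forall t, t0 - e < t < t0 + e ->
    forall x, x \in Q -> ~~ on_line t0 (h t0) x -> right_of t (h t) x = right_of t0 (h t0) x.
Proof.
move=> hc; elim: Q => [|y Q [e e0 IH]]; first by exists 1.
have [e1 e10 H1] := ball_side1 h t0 y hc.
exists (Num.min e e1); first by rewrite lt_min e0.
move=> t /andP[l u] x; rewrite inE => /orP[/eqP->|].
  apply: H1; apply/andP; split.
    by apply: le_lt_trans l; rewrite lerD2l lerN2 ge_min lexx orbT.
  by apply: lt_le_trans u _; rewrite lerD2l ge_min lexx orbT.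
apply: IH; apply/andP; split.
  by apply: le_lt_trans l; rewrite lerD2l lerN2 ge_min lexx.
by apply: lt_le_trans u _; rewrite lerD2l ge_min lexx.
Qed.
End Helpers3.
End M_H3.
Import M_H3.

Module M_H4.
Import numFieldNormedType.Exports.
Section Helpers4.
Variable R : realType.
Notation pt := (R * R)%type.

Lemma core (P Q S : seq pt) (k : nat) (h : R -> R) (t0 : R) (a a' : int) :
  uniq P -> uniq Q -> (forall x, x \in Q -> x \notin P) ->
  {subset P <= S} -> {subset Q <= S} -> general_position S ->
  is_rotation P k h -> a != a' ->
  (exists2 e : R, 0 < e &
    (forall t, t0 - e < t < t0 -> count (on_line t (h t)) P = 1%N ->
       (count (right_of t (h t)) Q)%:Z = a) /\
    (forall t, t0 < t < t0 + e -> count (on_line t (h t)) P = 1%N ->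
       (count (right_of t (h t)) Q)%:Z = a')) ->
  [/\ exists p q, [/\ p \in P, q \in Q, on_line t0 (h t0) p & on_line t0 (h t0) q],
     count (on_line t0 (h t0)) P = 1%N, count (on_line t0 (h t0)) Q = 1%N,
     count (right_of t0 (h t0)) P = k &
     [/\ a = (count (right_of t0 (h t0)) Q)%:Z \/ a = (count (right_of t0 (h t0)) Q)%:Z + 1 &
         a' = (count (right_of t0 (h t0)) Q)%:Z \/ a' = (count (right_of t0 (h t0)) Q)%:Z + 1]].
Proof.
move=> uP uQ dQP sP sQ gp rot aa' [e e0 [Hl Hr]].
have rot' := rot; case: rot' => hper hc h0 [h12 hfin hk].
have [e1 e10 He1] := @near_sides _ Q h t0 hc.
set c0 := h t0 in He1 *.
set eta : R := Num.min e e1.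
have eta0 : 0 < eta by rewrite lt_min e0.
have etae : eta <= e by rewrite ge_min lexx.
have etae1 : eta <= e1 by rewrite ge_min lexx orbT.
have [t1 [/andP[t1l t1u] t1g]] := @generic _ _ _ _ (t0 - eta) t0 rot ltac:(lra).
have [t2 [/andP[t2l t2u] t2g]] := @generic _ _ _ _ t0 (t0 + eta) rot ltac:(lra).
have A1 := Hl t1 ltac:(apply/andP; split; lra) t1g.
have A2 := Hr t2 ltac:(apply/andP; split; lra) t2g.
have S1 := @count_split _ _ _ _ _ _ (He1 t1 ltac:(apply/andP; split; lra)).
have S2 := @count_split _ _ _ _ _ _ (He1 t2 ltac:(apply/andP; split; lra)).
set cR := count (right_of t0 c0) Q in S1 S2 *.
set o1 := count (fun x => on_line t0 c0 x && right_of t1 (h t1) x) Q in S1.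
set o2 := count (fun x => on_line t0 c0 x && right_of t2 (h t2) x) Q in S2.
set cO := count (on_line t0 c0) Q.
have o1le : (o1 <= cO)%N by apply: sub_count => x /= /andP[].
have o2le : (o2 <= cO)%N by apply: sub_count => x /= /andP[].
rewrite S1 in A1; rewrite S2 in A2.
have cOpos : (0 < cO)%N.
  case: (posnP cO) => // c00; exfalso; move: aa'; rewrite -A1 -A2.
  have -> : o1 = 0%N by lia.
  have -> : o2 = 0%N by lia.
  by rewrite eqxx.
have cPpos : (0 < count (on_line t0 c0) P)%N by case: (h12 t0) => ->.
have [q [qQ qon]] := @one_in _ _ _ cOpos.
have [p [pP pon]] := @one_in _ _ _ cPpos.
have qp : q != p by apply: contraTneq pP => <-; apply: dQP.
have col3 : forall u v w, u \in S -> v \in S -> w \in S -> u != v -> v != w -> u != w ->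
    on_line t0 c0 u -> on_line t0 c0 v -> on_line t0 c0 w -> False.
  move=> u v w uS vS wS uv vw uw ou ov ow.
  by move: (gp u v w uS vS wS uv vw uw); rewrite (@collinear _ _ _ _ _ _ ou ov ow) eqxx.
have cO1 : cO = 1%N.
  apply/eqP; rewrite eqn_leq cOpos andbT leqNgt; apply/negP => H.
  have [x [y [xQ yQ xy ox oy]]] := @two_in _ _ _ uQ H.
  have xp : x != p by apply: contraTneq pP => <-; apply: dQP.
  have yp : y != p by apply: contraTneq pP => <-; apply: dQP.
  by apply: (col3 p x y (sP _ pP) (sQ _ xQ) (sQ _ yQ) _ xy _ pon ox oy); rewrite eq_sym.
have cP1 : count (on_line t0 c0) P = 1%N.
  apply/eqP; rewrite eqn_leq cPpos andbT leqNgt; apply/negP => H.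
  have [x [y [xP yP xy ox oy]]] := @two_in _ _ _ uP H.
  have xq : q != x by apply: contraTneq xP => <-; apply: dQP.
  have yq : q != y by apply: contraTneq yP => <-; apply: dQP.
  exact: (col3 q x y (sQ _ qQ) (sP _ xP) (sP _ yP) xq xy yq qon ox oy).
split => //.
- by exists p, q.
- exact: hk.
- rewrite cO1 in o1le o2le.
  have G : forall (o : nat) (x : int), (o <= 1)%N -> (cR + o)%N%:Z = x ->
      x = cR%:Z \/ x = cR%:Z + 1.
    move=> o x ol <-; case: o ol => [|[|]] // _; first by left; rewrite addn0.
    by right; rewrite PoszD.
  by split; [exact: G o1le A1 | exact: G o2le A2].
Qed.
End Helpers4.
End M_H4.
Import M_H4.

Theorem lemma1 (R : realType) (Blue Red : seq (R * R)) (delta k : nat) :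
  uniq Blue -> uniq Red -> ~~ has (mem Red) Blue ->
  general_position (Blue ++ Red) -> distinct_abscissae (Blue ++ Red) ->
  size Blue = (size Red + 2 * delta)%N ->
  (forall h : R -> R, is_rotation Red k h -> forall t0 : R,
     (transition (fun t => weight Blue Red (right_of t (h t))) t0
                 delta%:Z (delta%:Z + 1) \/
      transition (fun t => weight Blue Red (right_of t (h t))) t0
                 (delta%:Z + 1) delta%:Z) ->
     balanced Blue Red delta%:Z t0 (h t0)) /\
  (forall h : R -> R, is_rotation Blue k h -> forall t0 : R,
     (transition (fun t => weight Blue Red (right_of t (h t))) t0
                 delta%:Z (delta%:Z - 1) \/
      transition (fun t => weight Blue Red (right_of t (h t))) t0
                 (delta%:Z - 1) delta%:Z) ->
     balanced Blue Red delta%:Z t0 (h t0)).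
Proof.
move=> uB uR disj gp _ sz.
have dBR : forall x, x \in Blue -> x \notin Red by apply/hasPn.
have dRB : forall x, x \in Red -> x \notin Blue.
  by move=> x xR; apply/negP => xB; have := dBR x xB; rewrite xR.
have sB : {subset Blue <= Blue ++ Red} by move=> x xB; rewrite mem_cat xB.
have sR : {subset Red <= Blue ++ Red} by move=> x xR; rewrite mem_cat xR orbT.
have TB := @trichot R Blue. have TR := @trichot R Red.
split.
- move=> h rot t0 Htr.
  have rot' := rot; case: rot' => _ _ _ [_ _ hk].
  have key : forall A A' : int,
      transition (fun t => weight Blue Red (right_of t (h t))) t0 A A' ->
      exists2 e : R, 0 < e &
      (forall t, t0 - e < t < t0 -> count (on_line t (h t)) Red = 1%N ->
         (count (right_of t (h t)) Blue)%:Z = A + k%:Z) /\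
      (forall t, t0 < t < t0 + e -> count (on_line t (h t)) Red = 1%N ->
         (count (right_of t (h t)) Blue)%:Z = A' + k%:Z).
    move=> A A' [e e0 [L Rr]]; exists e => //; split => t ti tg.
      by have := L t ti; rewrite /weight (hk t tg) => <-; rewrite subrK.
    by have := Rr t ti; rewrite /weight (hk t tg) => <-; rewrite subrK.
  have [A [A' [AA' HA HK]]] : exists A A' : int, [/\ A != A',
      [/\ A = delta%:Z \/ A = delta%:Z + 1 & A' = delta%:Z \/ A' = delta%:Z + 1] &
      exists2 e : R, 0 < e &
      (forall t, t0 - e < t < t0 -> count (on_line t (h t)) Red = 1%N ->
         (count (right_of t (h t)) Blue)%:Z = A + k%:Z) /\
      (forall t, t0 < t < t0 + e -> count (on_line t (h t)) Red = 1%N ->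
         (count (right_of t (h t)) Blue)%:Z = A' + k%:Z)].
    case: Htr => /key H; [exists delta%:Z, (delta%:Z + 1) | exists (delta%:Z + 1), delta%:Z];
      split => //; try (by split; [left|right]); try (by split; [right|left]).
    1,2: by apply/negP => /eqP; clear; lia.
  have AA'' : A + k%:Z != A' + k%:Z by rewrite (inj_eq (addIr _)).
  have [[p [q [pR qB pon qon]]] cP cQ rP [Ha Ha']] :=
    @core _ Red Blue _ k h t0 _ _ uR uB dBR sR sB gp rot AA'' HK.
  set cR := count (right_of t0 (h t0)) Blue in Ha Ha'.
  have EcR : cR%:Z = delta%:Z + k%:Z.
    case: HA => HA HA'; move/eqP: AA' => AA'; clear -HA HA' Ha Ha' AA'.
    rewrite /cR in Ha Ha' *; lia.
  split.
  + exists q, p; split => //; [exact: sB | exact: sR |].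
    by apply: contraTneq pR => <-; apply: dBR.
  + by rewrite /weight -/cR rP; clear -EcR; lia.
  + have T1 := TB t0 (h t0); have T2 := TR t0 (h t0).
    rewrite /weight; rewrite -/cR cQ in T1; rewrite rP cP in T2.
    clear -T1 T2 EcR sz; lia.
- move=> h rot t0 Htr.
  have rot' := rot; case: rot' => _ _ _ [_ _ hk].
  have key : forall A A' : int,
      transition (fun t => weight Blue Red (right_of t (h t))) t0 A A' ->
      exists2 e : R, 0 < e &
      (forall t, t0 - e < t < t0 -> count (on_line t (h t)) Blue = 1%N ->
         (count (right_of t (h t)) Red)%:Z = k%:Z - A) /\
      (forall t, t0 < t < t0 + e -> count (on_line t (h t)) Blue = 1%N ->
         (count (right_of t (h t)) Red)%:Z = k%:Z - A').
    move=> A A' [e e0 [L Rr]]; exists e => //; split => t ti tg.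
      by have := L t ti; rewrite /weight (hk t tg) => <-; rewrite opprB addrC subrK.
    by have := Rr t ti; rewrite /weight (hk t tg) => <-; rewrite opprB addrC subrK.
  have [A [A' [AA' HA HK]]] : exists A A' : int, [/\ A != A',
      [/\ A = delta%:Z \/ A = delta%:Z - 1 & A' = delta%:Z \/ A' = delta%:Z - 1] &
      exists2 e : R, 0 < e &
      (forall t, t0 - e < t < t0 -> count (on_line t (h t)) Blue = 1%N ->
         (count (right_of t (h t)) Red)%:Z = k%:Z - A) /\
      (forall t, t0 < t < t0 + e -> count (on_line t (h t)) Blue = 1%N ->
         (count (right_of t (h t)) Red)%:Z = k%:Z - A')].
    case: Htr => /key H; [exists delta%:Z, (delta%:Z - 1) | exists (delta%:Z - 1), delta%:Z];
      split => //; try (by split; [left|right]); try (by split; [right|left]).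
    1,2: by apply/negP => /eqP; clear; lia.
  have AA'' : k%:Z - A != k%:Z - A'.
    by move/eqP: AA' => AA'; apply/negP => /eqP; clear -AA'; lia.
  have [[p [q [pB qR pon qon]]] cP cQ rP [Ha Ha']] :=
    @core _ Blue Red _ k h t0 _ _ uB uR dRB sB sR gp rot AA'' HK.
  set cR := count (right_of t0 (h t0)) Red in Ha Ha'.
  have EcR : cR%:Z = k%:Z - delta%:Z.
    case: HA => HA HA'; move/eqP: AA' => AA'; clear -HA HA' Ha Ha' AA'.
    rewrite /cR in Ha Ha' *; lia.
  split.
  + exists p, q; split => //; [exact: sB | exact: sR |].
    by apply: contraTneq qR => <-; apply: dBR.
  + by rewrite /weight -/cR rP; clear -EcR; lia.
  + have T1 := TB t0 (h t0); have T2 := TR t0 (h t0).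
    rewrite /weight; rewrite rP cP in T1; rewrite -/cR cQ in T2.
    clear -T1 T2 EcR sz; lia.
Qed.
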